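(* Fix an observation sequence $\{s_t,a_t\}_{t\in\mathbb Z}$, $\theta,\hat\theta\in\Theta$, a time $t$, an indexed family $\{\rho^\theta_t\}_{t\in\mathbb Z}$ as below, and any probability measure $\varphi$ on $\mathcal O\times\{0,1\}$. Then $$\big\|\varphi K^{\hat\theta,\theta}_{F,t}-\varphi K^{\theta,\theta}_{F,t}\big\|_{TV}\le\frac{\max_{o_{t-1},o_t,b_t}h(\theta;o_{t-1},s_t,a_t,o_t,b_t)}{\min_{o_{t-1},o_t,b_t}h(\theta;o_{t-1},s_t,a_t,o_t,b_t)}\cdot\frac{L_{\theta,\|\hat\theta-\theta\|_2}\,\|\hat\theta-\theta\|_2}{\min_{o_{t-1},o_t,b_t}h(\hat\theta;o_{t-1},s_t,a_t,o_t,b_t)}.$$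
   Context: $\mathcal S,\mathcal A,\mathcal O$ are finite sets; $\Theta=\Theta_{hi}\times\Theta_{lo}\times\Theta_b$ is a convex compact subset of a Euclidean space. There are policies $\pi_{hi}(o\mid s;\theta_{hi})$ (distribution on $\mathcal O$), $\pi_{lo}(a\mid s,o;\theta_{lo})$ (distribution on $\mathcal A$), $\pi_b(b\mid s,o';\theta_b)$ (distribution on $\{0,1\}$); standing assumption: on an open set $\tilde\Theta\supseteq\Theta$ they are defined, strictly positive and continuously differentiable in $\theta$. For fixed $\zeta\in(0,1)$, $\bar\pi_{hi}(o_t\mid s_t,o_{t-1},b_t;\theta_{hi})$ equals $\pi_{hi}(o_t\mid s_t;\theta_{hi})$ if $b_t=1$, $1-\zeta+\zeta/|\mathcal O|$ if $b_t=0,o_t=o_{t-1}$, $\zeta/|\mathcal O|$ if $b_t=0,o_t\ne o_{t-1}$. Define $h(\theta;o_{t-1},s_t,a_t,o_t,b_t)=\pi_b(b_t\mid s_t,o_{t-1};\theta_b)\bar\pi_{hi}(o_t\mid s_t,o_{t-1},b_t;\theta_{hi})\pi_{lo}(a_t\mid s_t,o_t;\theta_{lo})$. For $\theta\in\Theta,\delta>0$, $L_{\theta,\delta}$ is the smallest constant $L$ such that for all values of $(o_{t-1},s_t,a_t,o_t,b_t)$, $\tilde\theta\mapsto h(\tilde\theta;o_{t-1},s_t,a_t,o_t,b_t)$ is $L$-Lipschitz (in $\|\cdot\|_2$) on $\{\tilde\theta\in\Theta:\|\tilde\theta-\theta\|_2\le\delta\}$. Given the observation sequence, the backward operator $B^\theta_t$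 maps a probability measure $\rho$ on $\mathcal O\times\{0,1\}$ to the probability measure $B^\theta_t\rho(o_t,b_t)\propto\sum_{o_{t+1},b_{t+1}}h(\theta;o_t,s_{t+1},a_{t+1},o_{t+1},b_{t+1})\rho(o_{t+1},b_{t+1})$ (normalized). $\{\rho^\theta_t\}_{t\in\mathbb Z}$ is a family of strictly positive probability measures on $\mathcal O\times\{0,1\}$ with $B^\theta_t\rho^\theta_{t+1}=\rho^\theta_t$ for all $t$. For $\hat\theta\in\Theta$, the forward smoothing operator is $\varphi K^{\hat\theta,\theta}_{F,t}(o_t,b_t)=C^{\hat\theta,\theta}_F\sum_{o_{t-1},b_{t-1}}\frac{h(\hat\theta;o_{t-1},s_t,a_t,o_t,b_t)\rho^\theta_t(o_t,b_t)\varphi(o_{t-1},b_{t-1})}{\sum_{o'_t,b'_t}h(\theta;o_{t-1},s_t,a_t,o'_t,b'_t)\rho^\theta_t(o'_t,b'_t)}$, where $C^{\hat\theta,\theta}_F>0$ normalizes the result to a probability measure. $\|\nu_1-\nu_2\|_{TV}=\frac12\sum|\nu_1-\nu_2|$. *)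

(* Defs.v *)
From HB Require Import structures.
From mathcomp Require Import all_boot all_order all_algebra.
From mathcomp Require Import all_classical all_reals all_analysis.
Set Implicit Arguments. Unset Strict Implicit. Unset Printing Implicit Defensive.
Import Order.TTheory GRing.Theory Num.Theory.
Import numFieldNormedType.Exports.
Local Open Scope classical_set_scope.
Local Open Scope ring_scope.

(* Parameters theta = (theta_hi, theta_lo, theta_b) in R^d1 x R^d2 x R^d3.
   Access: th.1.1 = theta_hi, th.1.2 = theta_lo, th.2 = theta_b. *)
Definition param (R : realType) (d1 d2 d3 : nat) :=
  ('rV[R]_d1 * 'rV[R]_d2 * 'rV[R]_d3)%type.

Definition norm2 (R : realType) d1 d2 d3 (x : param R d1 d2 d3) : R :=
  Num.sqrt (\sum_i (x.1.1 ord0 i) ^+ 2 + \sum_i (x.1.2 ord0 i) ^+ 2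
            + \sum_i (x.2 ord0 i) ^+ 2).

Definition psub (R : realType) d1 d2 d3 (x y : param R d1 d2 d3)
  : param R d1 d2 d3 := (x.1.1 - y.1.1, x.1.2 - y.1.2, x.2 - y.2).

Definition Theta (R : realType) d1 d2 d3 (Thi : set 'rV[R]_d1)
  (Tlo : set 'rV[R]_d2) (Tb : set 'rV[R]_d3) : set (param R d1 d2 d3) :=
  Thi `*` Tlo `*` Tb.

Definition convex_param (R : realType) d1 d2 d3 (T : set (param R d1 d2 d3)) :=
  forall (x y : param R d1 d2 d3) (l : R), T x -> T y -> 0 <= l <= 1 ->
    T (l *: x.1.1 + (1 - l) *: y.1.1, l *: x.1.2 + (1 - l) *: y.1.2,
       l *: x.2 + (1 - l) *: y.2).

Definition C1_on (R : realType) n (U : set 'rV[R]_n) (f : 'rV[R]_n -> R) :=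
  (forall x, U x -> differentiable f x) /\
  (forall v x, U x -> {for x, continuous (fun y => 'D_v f y)}).

(* Policies:  pihi s o th = pi_hi(o | s; th),
              pilo s o a th = pi_lo(a | s, o; th),
              pib s o' b th = pi_b(b | s, o'; th). *)
Definition standing_assumption (R : realType) (S A O : finType) d1 d2 d3
  (Thi : set 'rV[R]_d1) (Tlo : set 'rV[R]_d2) (Tb : set 'rV[R]_d3)
  (pihi : S -> O -> 'rV[R]_d1 -> R) (pilo : S -> O -> A -> 'rV[R]_d2 -> R)
  (pib : S -> O -> bool -> 'rV[R]_d3 -> R) :=
  exists (Uhi : set 'rV[R]_d1) (Ulo : set 'rV[R]_d2) (Ub : set 'rV[R]_d3),
    [/\ open Uhi, open Ulo & open Ub] /\
    [/\ Thi `<=` Uhi, Tlo `<=` Ulo & Tb `<=` Ub] /\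
    (forall s, forall x, Uhi x ->
       (forall o, 0 < pihi s o x) /\ \sum_o pihi s o x = 1) /\
    (forall s o, forall x, Ulo x ->
       (forall a, 0 < pilo s o a x) /\ \sum_a pilo s o a x = 1) /\
    (forall s o, forall x, Ub x ->
       (forall b, 0 < pib s o b x) /\ \sum_b pib s o b x = 1) /\
    (forall s o, C1_on Uhi (pihi s o)) /\
    (forall s o a, C1_on Ulo (pilo s o a)) /\
    (forall s o b, C1_on Ub (pib s o b)).

Definition pibar (R : realType) (S O : finType) d1 (zeta : R)
  (pihi : S -> O -> 'rV[R]_d1 -> R) (oprev : O) (st : S) (b : bool) (o : O)
  (x : 'rV[R]_d1) : R :=
  if b then pihi st o x
  else if o == oprev then 1 - zeta + zeta / #|O|%:R else zeta / #|O|%:R.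

Definition hfun (R : realType) (S A O : finType) d1 d2 d3 (zeta : R)
  (pihi : S -> O -> 'rV[R]_d1 -> R) (pilo : S -> O -> A -> 'rV[R]_d2 -> R)
  (pib : S -> O -> bool -> 'rV[R]_d3 -> R) (th : param R d1 d2 d3)
  (oprev : O) (st : S) (at_ : A) (o : O) (b : bool) : R :=
  pib st oprev b th.2 * pibar zeta pihi oprev st b o th.1.1 * pilo st o at_ th.1.2.

(* measures on O x {0,1} are represented by their mass functions *)
Definition is_prob (R : realType) (O : finType) (p : O -> bool -> R) :=
  (forall o b, 0 <= p o b) /\ \sum_o \sum_b p o b = 1.

Definition is_pos_prob (R : realType) (O : finType) (p : O -> bool -> R) :=
  (forall o b, 0 < p o b) /\ \sum_o \sum_b p o b = 1.

Definition normalize (R : realType) (O : finType) (f : O -> bool -> R)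
  : O -> bool -> R :=
  fun o b => f o b / \sum_o' \sum_b' f o' b'.

Definition tv (R : realType) (O : finType) (p q : O -> bool -> R) : R :=
  2^-1 * \sum_o \sum_b `|p o b - q o b|.

Definition backward (R : realType) (S A O : finType) d1 d2 d3 (zeta : R)
  pihi pilo pib (s : int -> S) (a : int -> A) (th : param R d1 d2 d3)
  (t : int) (rho : O -> bool -> R) : O -> bool -> R :=
  normalize (fun o b => \sum_o' \sum_b'
    @hfun R S A O d1 d2 d3 zeta pihi pilo pib th o (s (t + 1)) (a (t + 1)) o' b'
      * rho o' b').

(* forward smoothing operator  phi K^{thh,th}_{F,t}, with rhot = rho^th_t *)
Definition forward (R : realType) (S A O : finType) d1 d2 d3 (zeta : R)
  pihi pilo pib (s : int -> S) (a : int -> A) (thh th : param R d1 d2 d3)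
  (t : int) (rhot : O -> bool -> R) (phi : O -> bool -> R) : O -> bool -> R :=
  normalize (fun o b => \sum_op \sum_bp
    @hfun R S A O d1 d2 d3 zeta pihi pilo pib thh op (s t) (a t) o b * rhot o b
      * phi op bp
    / (\sum_o' \sum_b'
        @hfun R S A O d1 d2 d3 zeta pihi pilo pib th op (s t) (a t) o' b'
          * rhot o' b')).

Definition hmax (R : realType) (S A O : finType) d1 d2 d3 (zeta : R)
  pihi pilo pib (s : int -> S) (a : int -> A) (th : param R d1 d2 d3)
  (t : int) : R :=
  sup (range (fun x : O * O * bool =>
    @hfun R S A O d1 d2 d3 zeta pihi pilo pib th x.1.1 (s t) (a t) x.1.2 x.2)).

Definition hmin (R : realType) (S A O : finType) d1 d2 d3 (zeta : R)
  pihi pilo pib (s : int -> S) (a : int -> A) (th : param R d1 d2 d3)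
  (t : int) : R :=
  inf (range (fun x : O * O * bool =>
    @hfun R S A O d1 d2 d3 zeta pihi pilo pib th x.1.1 (s t) (a t) x.1.2 x.2)).

Definition Lip_const (R : realType) (S A O : finType) d1 d2 d3 (zeta : R)
  pihi pilo pib (Thi : set 'rV[R]_d1) (Tlo : set 'rV[R]_d2)
  (Tb : set 'rV[R]_d3) (th : param R d1 d2 d3) (delta : R) : R :=
  inf [set L : R | 0 <= L /\
    forall (op : O) (st : S) (at_ : A) (o : O) (b : bool)
           (x y : param R d1 d2 d3),
      Theta Thi Tlo Tb x -> Theta Thi Tlo Tb y ->
      norm2 (psub x th) <= delta -> norm2 (psub y th) <= delta ->
      `|@hfun R S A O d1 d2 d3 zeta pihi pilo pib x op st at_ o b
        - @hfun R S A O d1 d2 d3 zeta pihi pilo pib y op st at_ o b|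
      <= L * norm2 (psub x y)].

(* Main.v *)
Require Import Defs.
From HB Require Import structures.
From mathcomp Require Import all_boot all_order all_algebra.
From mathcomp Require Import all_classical all_reals all_analysis.
From mathcomp Require Import ring lra.
Set Implicit Arguments. Unset Strict Implicit. Unset Printing Implicit Defensive.
Import Order.TTheory GRing.Theory Num.Theory.
Import numFieldNormedType.Exports.
Local Open Scope classical_set_scope.
Local Open Scope ring_scope.

Section Lip.
Variable R : realType.

Lemma cont_bounded n (K : set 'rV[R]_n) (g : 'rV[R]_n -> R) :
  compact K -> {in K, continuous g} ->
  exists M, 0 <= M /\ forall z, K z -> `|g z| <= M.
Proof.
move=> cK cg.
have cI : compact (g @` K) by apply: continuous_compact => //; exact: continuous_in_subspaceT.
have := compact_bounded cI; case => M [_ HM].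
exists (Num.max 0 (M + 1)); split; first by rewrite le_max lexx.
move=> z Kz; have := HM (M + 1) ltac:(by rewrite ltrDl) (g z) (ex_intro2 _ _ z Kz erefl).
by move=> /= H; rewrite le_max H orbT.
Qed.

Lemma shift_derive n (f : 'rV[R]_n -> R) (v y : 'rV[R]_n) (s : R) :
  derivable f (s *: v + y) v ->
  is_derive s 1 (fun r : R => f (r *: v + y)) ('D_v f (s *: v + y)).
Proof.
move=> d.
have E : (fun h : R => h^-1 *: (((fun r : R => f (r *: v + y)) \o shift s) (h *: 1) - f (s *: v + y)))
   = (fun h : R => h^-1 *: ((f \o shift (s *: v + y)) (h *: v) - f (s *: v + y))).
  apply: funext => h /=; congr (_ *: (f _ - _)).
  by rewrite /shift /= [h%:A]mulr1 scalerDl addrA.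
apply: DeriveDef.
  by rewrite /derivable E.
by rewrite /derive E.
Qed.


Definition convex_set n (K : set 'rV[R]_n) :=
  forall x y l, K x -> K y -> 0 <= l <= 1 -> K (l *: x + (1 - l) *: y).

Lemma entry_le_norm n (v : 'rV[R]_n) i :
  `|v ord0 i| <= Num.sqrt (\sum_j (v ord0 j) ^+ 2).
Proof.
rewrite -sqrtr_sqr ler_sqrt ?sumr_ge0 // => [|j _]; last exact: sqr_ge0.
rewrite (bigD1 i) //= lerDl sumr_ge0 // => j _; exact: sqr_ge0.
Qed.

Lemma lip_C1 n (U K : set 'rV[R]_n) (f : 'rV[R]_n -> R) :
  K `<=` U -> compact K -> convex_set K ->
  (forall x, U x -> differentiable f x) ->
  (forall v x, U x -> {for x, continuous (fun y => 'D_v f y)}) ->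
  exists M, 0 <= M /\ forall x y, K x -> K y ->
    `|f x - f y| <= M * Num.sqrt (\sum_i ((x - y) ord0 i) ^+ 2).
Proof.
move=> KU cK convK df cD.
have hb : forall i : 'I_n, exists M, 0 <= M /\ forall z, K z -> `|'D_('e_i) f z| <= M.
  move=> i; apply: cont_bounded => // z; rewrite inE => Kz.
  exact: cD (KU _ Kz).
have [Mf HMf] := boolp.choice hb.
exists (\sum_i Mf i); split; first by apply: sumr_ge0 => i _; case: (HMf i).
move=> x y Kx Ky.
set v := x - y.
have inK : forall r : R, 0 <= r <= 1 -> K (r *: v + y).
  move=> r r01; have := convK x y r Kx Ky r01.
  suff -> : r *: v + y = r *: x + (1 - r) *: y by [].
  by rewrite /v scalerBr scalerBl scale1r -addrA [-(r *: y) + y]addrC.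
have [c c01 Hc] : exists2 c, c \in `[0, 1]%R &
    (fun r : R => f (r *: v + y)) 1 - (fun r : R => f (r *: v + y)) 0 =
    'D_v f (c *: v + y) * (1 - 0).
  apply: (@MVT_segment R (fun r => f (r *: v + y)) (fun r => 'D_v f (r *: v + y))) => //.
    move=> r; rewrite in_itv /= => /andP[r0 r1].
    apply: shift_derive; apply: diff_derivable; apply: df; apply: KU; apply: inK.
    by rewrite !ltW.
  apply: continuous_in_subspaceT => r; rewrite inE /= in_itv /= => r01.
  apply: (@continuous_comp _ _ _ (fun r : R => r *: v + y) f).
    apply: continuousD; last exact: cst_continuous.
    exact: scalel_continuous.
  apply: differentiable_continuous; apply: df; apply: KU; exact: inK.
move: Hc => /=; rewrite scale1r scale0r add0r subr0 mulr1 /v subrK => ->.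
have Kz : K (c *: v + y) by apply: inK; move: c01; rewrite in_itv.
set z := c *: v + y.
rewrite deriveE; last by apply: df; apply: KU.
rewrite {1}(row_sum_delta (x - y)) linear_sum /=.
rewrite mulr_suml; apply: (le_trans (ler_norm_sum _ _ _)); apply: ler_sum => i _.
rewrite linearZ /= -deriveE; last by apply: df; apply: KU.
rewrite normrZ mulrC; apply: ler_pM => //.
  by case: (HMf i) => _ /(_ z Kz).
exact: entry_le_norm.
Qed.


Lemma lip_fam (I : finType) n (U K : set 'rV[R]_n) (fs : I -> 'rV[R]_n -> R) :
  K `<=` U -> compact K -> convex_set K -> (forall i, C1_on U (fs i)) ->
  exists M, 0 <= M /\ forall i x y, K x -> K y ->
    `|fs i x - fs i y| <= M * Num.sqrt (\sum_j ((x - y) ord0 j) ^+ 2).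
Proof.
move=> KU cK convK C1.
have hb : forall i, exists M, 0 <= M /\ forall x y, K x -> K y ->
    `|fs i x - fs i y| <= M * Num.sqrt (\sum_j ((x - y) ord0 j) ^+ 2).
  move=> i; case: (C1 i) => d c; exact: lip_C1 KU cK convK d c.
have [Mf HMf] := boolp.choice hb.
exists (\sum_i Mf i); split; first by apply: sumr_ge0 => i _; case: (HMf i).
move=> i x y Kx Ky; case: (HMf i) => _ /(_ x y Kx Ky) H.
apply: (le_trans H); apply: ler_wpM2r; first exact: sqrtr_ge0.
rewrite (bigD1 i) //= lerDl; apply: sumr_ge0 => j _; by case: (HMf j).
Qed.

Lemma le1_of_sum (I : finType) (F : I -> R) i :
  (forall j, 0 < F j) -> \sum_j F j = 1 -> F i <= 1.
Proof.
move=> Fp <-; rewrite (bigD1 i) //= lerDl; apply: sumr_ge0 => j _; exact: ltW.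
Qed.

Lemma prod3 (a b c a' b' c' : R) :
  `|b| <= 1 -> `|c| <= 1 -> `|a'| <= 1 -> `|b'| <= 1 ->
  `|a * b * c - a' * b' * c'| <= `|a - a'| + `|b - b'| + `|c - c'|.
Proof.
move=> hb hc ha' hb'.
have -> : a * b * c - a' * b' * c' =
   (a - a') * b * c + a' * (b - b') * c + a' * b' * (c - c') by ring.
apply: (le_trans (ler_normD _ _)); apply: lerD; last first.
  rewrite !normrM -[X in _ <= X]mul1r; apply: ler_pM => //.
  by rewrite -[1]mul1r; apply: ler_pM.
apply: (le_trans (ler_normD _ _)); apply: lerD.
  rewrite !normrM -[X in _ <= X]mulr1 -mulrA; apply: ler_pM => //.
  by rewrite -[1]mul1r; apply: ler_pM.
rewrite !normrM -[X in _ <= X]mul1r -[X in _ <= X]mulr1; apply: ler_pM => //.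
  by apply: ler_pM.
Qed.

Lemma zdiv (z : R) k : 0 <= z -> 0 <= z / k%:R <= z.
Proof.
move=> z0; case: k => [|k]; first by rewrite invr0 mulr0 lexx.
rewrite divr_ge0 //= ler_pdivrMr ?ltr0n //; apply: ler_peMr => //.
by rewrite ler1n.
Qed.


Section Proj.
Variables (d1 d2 d3 : nat) (Thi : set 'rV[R]_d1) (Tlo : set 'rV[R]_d2) (Tb : set 'rV[R]_d3).

Lemma cont11 : continuous (fun p : param R d1 d2 d3 => p.1.1).
Proof.
move=> p; apply: (@continuous_comp _ _ _ (fun q : param R d1 d2 d3 => q.1) fst).
  exact: cvg_fst.
exact: cvg_fst.
Qed.
Lemma cont12 : continuous (fun p : param R d1 d2 d3 => p.1.2).
Proof.
move=> p; apply: (@continuous_comp _ _ _ (fun q : param R d1 d2 d3 => q.1) snd).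
  exact: cvg_fst.
exact: cvg_snd.
Qed.
Lemma cont2 : continuous (fun p : param R d1 d2 d3 => p.2).
Proof. move=> p; exact: cvg_snd. Qed.

Variable th : param R d1 d2 d3.
Hypothesis thT : Theta Thi Tlo Tb th.
Hypothesis cT : compact (Theta Thi Tlo Tb).
Hypothesis cvT : convex_param (Theta Thi Tlo Tb).

Lemma comp_hi : compact Thi.
Proof.
have -> : Thi = (fun p : param R d1 d2 d3 => p.1.1) @` Theta Thi Tlo Tb.
  apply/seteqP; split => [x Hx|_ [p [[Hp _] _] <-] //].
  by exists (x, th.1.2, th.2) => //; case: thT => [[_ ?] ?].
apply: continuous_compact => //; apply: continuous_subspaceT; exact: cont11.
Qed.
Lemma comp_lo : compact Tlo.
Proof.
have -> : Tlo = (fun p : param R d1 d2 d3 => p.1.2) @` Theta Thi Tlo Tb.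
  apply/seteqP; split => [x Hx|_ [p [[_ Hp] _] <-] //].
  by exists (th.1.1, x, th.2) => //; case: thT => [[? _] ?].
apply: continuous_compact => //; apply: continuous_subspaceT; exact: cont12.
Qed.
Lemma comp_b : compact Tb.
Proof.
have -> : Tb = (fun p : param R d1 d2 d3 => p.2) @` Theta Thi Tlo Tb.
  apply/seteqP; split => [x Hx|_ [p [_ Hp] <-] //].
  by exists (th.1.1, th.1.2, x) => //; case: thT => [[? ?] _].
apply: continuous_compact => //; apply: continuous_subspaceT; exact: cont2.
Qed.

Lemma conv_hi : convex_set Thi.
Proof.
move=> x y l Hx Hy l01; case: thT => [[h1 h2] h3].
have H1 : Theta Thi Tlo Tb (x, th.1.2, th.2) by split. have H2 : Theta Thi Tlo Tb (y, th.1.2, th.2) by split.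
by have [[]] := cvT H1 H2 l01.
Qed.
Lemma conv_lo : convex_set Tlo.
Proof.
move=> x y l Hx Hy l01; case: thT => [[h1 h2] h3].
have H1 : Theta Thi Tlo Tb (th.1.1, x, th.2) by split. have H2 : Theta Thi Tlo Tb (th.1.1, y, th.2) by split.
by have [[]] := cvT H1 H2 l01.
Qed.
Lemma conv_b : convex_set Tb.
Proof.
move=> x y l Hx Hy l01; case: thT => [[h1 h2] h3].
have H1 : Theta Thi Tlo Tb (th.1.1, th.1.2, x) by split. have H2 : Theta Thi Tlo Tb (th.1.1, th.1.2, y) by split.
by have [[]] := cvT H1 H2 l01.
Qed.
End Proj.


Lemma pibar_bound (S O : finType) d1 (zeta : R) (pihi : S -> O -> 'rV[R]_d1 -> R)
   oprev st b o x :
  0 < zeta < 1 -> 0 <= pihi st o x <= 1 ->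
  0 <= pibar zeta pihi oprev st b o x <= 1.
Proof.
move=> /andP[z0 z1] hp; rewrite /pibar; case: b => //.
have /andP[a1 a2] := zdiv #|O| (ltW z0).
case: (o == oprev) => /=; last by rewrite a1 /= (le_trans a2) // ltW.
apply/andP; split; lra.
Qed.

Lemma norm1 x : 0 <= x <= 1 -> `|x| <= 1 :> R.
Proof. by case/andP => x0 x1; rewrite ger0_norm. Qed.

Lemma h_lip (S A O : finType) d1 d2 d3 (Thi : set 'rV[R]_d1) (Tlo : set 'rV[R]_d2)
  (Tb : set 'rV[R]_d3) pihi pilo pib (zeta : R) (th : param R d1 d2 d3) :
  convex_param (Theta Thi Tlo Tb) ->
  compact (Theta Thi Tlo Tb) ->
  standing_assumption Thi Tlo Tb pihi pilo pib ->
  0 < zeta < 1 -> Theta Thi Tlo Tb th ->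
  exists L, 0 <= L /\ forall (op : O) (st : S) (at_ : A) (o : O) (b : bool)
           (x y : param R d1 d2 d3),
      Theta Thi Tlo Tb x -> Theta Thi Tlo Tb y ->
      `|@hfun R S A O d1 d2 d3 zeta pihi pilo pib x op st at_ o b
        - @hfun R S A O d1 d2 d3 zeta pihi pilo pib y op st at_ o b|
      <= L * norm2 (psub x y).
Proof.
move=> cvT cT SA z01 thT.
case: SA => Uhi [Ulo [Ub [[oh ol ob] [[sh sl sb] [Phi [Plo [Pb [Chi [Clo Cb]]]]]]]]].
have [M1 [M1p H1]] := lip_fam (fs := fun p : S * O => pihi p.1 p.2) sh
   (comp_hi thT cT) (conv_hi thT cvT) (fun p => Chi p.1 p.2).
have [M2 [M2p H2]] := lip_fam (fs := fun p : S * O * A => pilo p.1.1 p.1.2 p.2) sl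
   (comp_lo thT cT) (conv_lo thT cvT) (fun p => Clo p.1.1 p.1.2 p.2).
have [M3 [M3p H3]] := lip_fam (fs := fun p : S * O * bool => pib p.1.1 p.1.2 p.2) sb
   (comp_b thT cT) (conv_b thT cvT) (fun p => Cb p.1.1 p.1.2 p.2).
exists (M3 + M1 + M2); split; first by rewrite !addr_ge0.
move=> op st at_ o b x y [[hx1 hx2] hx3] [[hy1 hy2] hy3].
have s1 : 0 <= \sum_j ((x.1.1 - y.1.1) ord0 j) ^+ 2 by apply: sumr_ge0 => j _; exact: sqr_ge0.
have s2 : 0 <= \sum_j ((x.1.2 - y.1.2) ord0 j) ^+ 2 by apply: sumr_ge0 => j _; exact: sqr_ge0.
have s3 : 0 <= \sum_j ((x.2 - y.2) ord0 j) ^+ 2 by apply: sumr_ge0 => j _; exact: sqr_ge0.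
have n1 : Num.sqrt (\sum_j ((x.1.1 - y.1.1) ord0 j) ^+ 2) <= norm2 (psub x y).
  rewrite /norm2 /psub /= ler_sqrt; [lra | lra].
have n2 : Num.sqrt (\sum_j ((x.1.2 - y.1.2) ord0 j) ^+ 2) <= norm2 (psub x y).
  rewrite /norm2 /psub /= ler_sqrt; [lra | lra].
have n3 : Num.sqrt (\sum_j ((x.2 - y.2) ord0 j) ^+ 2) <= norm2 (psub x y).
  rewrite /norm2 /psub /= ler_sqrt; [lra | lra].
have vhi : forall z o', Uhi z -> 0 <= pihi st o' z <= 1.
  move=> z o' Uz; have [P1 P2] := Phi st z Uz.
  by rewrite ltW //= (le1_of_sum (F := fun o => pihi st o z)).
have vlo : forall z o', Ulo z -> 0 <= pilo st o' at_ z <= 1.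
  move=> z o' Uz; have [P1 P2] := Plo st o' z Uz.
  by rewrite ltW //= (le1_of_sum (F := fun a => pilo st o' a z)).
have vb : forall z, Ub z -> 0 <= pib st op b z <= 1.
  move=> z Uz; have [P1 P2] := Pb st op z Uz.
  by rewrite ltW //= (le1_of_sum (F := fun b => pib st op b z)).
rewrite /hfun; apply: le_trans.
  apply: prod3.
  - exact/norm1/pibar_bound/vhi/sh.
  - exact/norm1/vlo/sl.
  - exact/norm1/vb/sb.
  - exact/norm1/pibar_bound/vhi/sh.
rewrite !mulrDl; apply: lerD; first apply: lerD.
+ apply: (le_trans (H3 (st, op, b) _ _ hx3 hy3)); exact: ler_wpM2l.
+ rewrite /pibar; clear vb; case: b; last by rewrite subrr normr0 mulr_ge0 // (le_trans _ n1) ?sqrtr_ge0.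
  apply: (le_trans (H1 (st, o) _ _ hx1 hy1)); exact: ler_wpM2l.
+ apply: (le_trans (H2 (st, o, at_) _ _ hx2 hy2)); exact: ler_wpM2l.
Qed.


Lemma fin_inf (I : finType) (F : I -> R) (i0 : I) : (forall i, 0 < F i) ->
  [/\ 0 < inf (range F), (forall i, inf (range F) <= F i) & inf (range F) <= sup (range F)].
Proof.
move=> Fp.
have ne : range F !=set0 by exists (F i0); exists i0.
have hl : has_lbound (range F) by exists 0 => _ [i _ <-]; exact: ltW.
have hu : has_ubound (range F).
  exists (F [arg max_(i > i0) F i]%O) => _ [i _ <-].
  by case: (@arg_maxP _ _ _ i0 xpredT F erefl) => j _ /(_ i erefl).
have lbi : forall i, inf (range F) <= F i by move=> i; apply: ge_inf => //; exists i.
split => //.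
  apply: (lt_le_trans (Fp [arg min_(i < i0) F i]%O)); apply: lb_le_inf => // _ [i _ <-].
  by case: (@arg_minP _ _ _ i0 xpredT F erefl) => j _ /(_ i erefl).
by apply: (le_trans (lbi i0)); apply: ub_le_sup => //; exists i0.
Qed.

Lemma sum2_gt0 (O : finType) (F : O -> bool -> R) (o0 : O) :
  (forall o b, 0 < F o b) -> 0 < \sum_o \sum_b F o b.
Proof.
move=> Fp; rewrite (bigD1 o0) //= big_bool /=.
have : 0 <= \sum_(i | i != o0) \sum_b F i b.
  by apply: sumr_ge0 => i _; apply: sumr_ge0 => b _; exact: ltW.
have := Fp o0 true; have := Fp o0 false; lra.
Qed.

Lemma swap4 (O : finType) (f : O -> bool -> O -> bool -> R) :
  \sum_o \sum_b \sum_op \sum_bp f o b op bp =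
  \sum_op \sum_bp \sum_o \sum_b f o b op bp.
Proof.
under eq_bigr do rewrite exchange_big /=.
under eq_bigr do under eq_bigr do rewrite exchange_big /=.
rewrite exchange_big /=; apply: eq_bigr => op _.
by rewrite exchange_big.
Qed.

Lemma tv_norm (O : finType) (u v : O -> bool -> R) c :
  (forall o b, 0 <= u o b) -> (forall o b, 0 <= v o b) ->
  \sum_o \sum_b v o b = 1 ->
  \sum_o \sum_b `|u o b - v o b| <= c * \sum_o \sum_b u o b ->
  tv (normalize u) (normalize v) <= c.
Proof.
move=> u0 v0 Hv HX.
set U := \sum_o \sum_b u o b in HX *.
set X : R := \sum_o \sum_b `|u o b - v o b| in HX *.
have U0 : 0 <= U by apply: sumr_ge0 => o _; apply: sumr_ge0.
have kX : `|U - 1| <= X.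
  rewrite -Hv /U -sumrB; apply: (le_trans (ler_norm_sum _ _ _)); apply: ler_sum => o _.
  by rewrite -sumrB; apply: (le_trans (ler_norm_sum _ _ _)).
have Up : 0 < U.
  rewrite lt_def U0 andbT; apply/eqP => U00.
  move: HX kX; rewrite U00 mulr0 sub0r normrN normr1 => H1 H2.
  by have := le_trans H2 H1; rewrite ler10.
have UN : U != 0 by rewrite gt_eqF.
rewrite /tv /normalize -/U Hv.
under eq_bigr do under eq_bigr do rewrite divr1.
set k : R := `|U - 1|.
have step : forall o b, `|u o b / U - v o b| <= (`|u o b - v o b| + v o b * k) * U^-1.
  move=> o b.
  have -> : u o b / U - v o b = ((u o b - v o b) - v o b * (U - 1)) * U^-1.
    by field.
  rewrite normrM [`|U^-1|]ger0_norm; last by rewrite invr_ge0 ltW.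
  apply: ler_wpM2r; first by rewrite invr_ge0 ltW.
  apply: (le_trans (ler_normB _ _)); rewrite normrM (ger0_norm (v0 o b)) //.
have S1 : \sum_o \sum_b `|u o b / U - v o b| <= (X + k) * U^-1.
  apply: (le_trans (y := \sum_o \sum_b (`|u o b - v o b| + v o b * k) * U^-1)).
    by apply: ler_sum => o _; apply: ler_sum => b _; exact: step.
  under eq_bigr do rewrite -mulr_suml.
  rewrite -mulr_suml; apply: ler_wpM2r; first by rewrite invr_ge0 ltW.
  under eq_bigr do rewrite big_split /=.
  rewrite big_split /= -/X; apply: lerD => //.
  under eq_bigr do rewrite -mulr_suml.
  by rewrite -mulr_suml Hv mul1r.
have w0 : 0 < U^-1 by rewrite invr_gt0.
have kX' : k <= X := kX.
have X0 : 0 <= X by apply: le_trans kX.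
have A1 : (X + k) * U^-1 <= (2 * X) * U^-1 by rewrite ler_pM2r //; lra.
have A2 : X * U^-1 <= c by rewrite ler_pdivrMr.
have : 0 <= \sum_o \sum_b `|u o b / U - v o b|.
  by apply: sumr_ge0 => o _; apply: sumr_ge0.
lra.
Qed.


Lemma h_pos (S A O : finType) d1 d2 d3 (Thi : set 'rV[R]_d1) (Tlo : set 'rV[R]_d2)
  (Tb : set 'rV[R]_d3) pihi pilo pib (zeta : R) (x : param R d1 d2 d3) :
  standing_assumption Thi Tlo Tb pihi pilo pib ->
  0 < zeta < 1 -> Theta Thi Tlo Tb x ->
  forall (op : O) (st : S) (at_ : A) (o : O) (b : bool),
    0 < @hfun R S A O d1 d2 d3 zeta pihi pilo pib x op st at_ o b.
Proof.
move=> SA z01 [[hx1 hx2] hx3] op st at_ o b.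
case: SA => Uhi [Ulo [Ub [_ [[sh sl sb] [Phi [Plo [Pb _]]]]]]].
rewrite /hfun; apply: mulr_gt0; first apply: mulr_gt0.
- exact: (Pb st op x.2 (sb _ hx3)).1.
- rewrite /pibar; case: b; first exact: (Phi st x.1.1 (sh _ hx1)).1.
  have nO : (0 < #|O|)%N by apply/card_gt0P; exists o.
  have zn : 0 < zeta / #|O|%:R by case/andP: z01 => z0 _; rewrite divr_gt0 // ltr0n.
  by case: (o == op) => //; move: z01 => /andP [? ?]; lra.
- exact: (Plo st o x.1.2 (sl _ hx2)).1.
Qed.

Lemma norm2_0 d1 d2 d3 (x : param R d1 d2 d3) : norm2 (psub x x) = 0.
Proof.
rewrite /norm2 /psub /= !subrr !big1 ?addr0 ?sqrtr0 // => i _; by rewrite mxE expr0n.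
Qed.

Lemma lip_bound (S A O : finType) d1 d2 d3 (Thi : set 'rV[R]_d1) (Tlo : set 'rV[R]_d2)
  (Tb : set 'rV[R]_d3) pihi pilo pib (zeta : R) (th thh : param R d1 d2 d3) :
  convex_param (Theta Thi Tlo Tb) ->
  compact (Theta Thi Tlo Tb) ->
  standing_assumption Thi Tlo Tb pihi pilo pib ->
  0 < zeta < 1 -> Theta Thi Tlo Tb th -> Theta Thi Tlo Tb thh ->
  let Lc := @Lip_const R S A O d1 d2 d3 zeta pihi pilo pib Thi Tlo Tb th (norm2 (psub thh th)) in
  0 <= Lc /\ forall (op : O) (st : S) (at_ : A) (o : O) (b : bool),
   `|@hfun R S A O d1 d2 d3 zeta pihi pilo pib thh op st at_ o b
        - @hfun R S A O d1 d2 d3 zeta pihi pilo pib th op st at_ o b|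
      <= Lc * norm2 (psub thh th).
Proof.
move=> cvT cT SA z01 thT thhT Lc.
have [L0 [L0p HL0]] := h_lip cvT cT SA z01 thT.
set d := norm2 (psub thh th).
have d0 : 0 <= d by exact: sqrtr_ge0.
set E := [set L : R | 0 <= L /\
    forall (op : O) (st : S) (at_ : A) (o : O) (b : bool)
           (x y : param R d1 d2 d3),
      Theta Thi Tlo Tb x -> Theta Thi Tlo Tb y ->
      norm2 (psub x th) <= d -> norm2 (psub y th) <= d ->
      `|@hfun R S A O d1 d2 d3 zeta pihi pilo pib x op st at_ o b
        - @hfun R S A O d1 d2 d3 zeta pihi pilo pib y op st at_ o b|
      <= L * norm2 (psub x y)].
have LcE : Lc = inf E by [].
have EL0 : E L0 by split => // *; exact: HL0.
have neE : nonempty E by exists L0.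
split.
  by rewrite LcE; apply: lb_le_inf => // L [].
move=> op st at_ o b.
have key : forall L, E L -> `|@hfun R S A O d1 d2 d3 zeta pihi pilo pib thh op st at_ o b
        - @hfun R S A O d1 d2 d3 zeta pihi pilo pib th op st at_ o b| <= L * d.
  move=> L [_ HL]; apply: HL => //; by rewrite ?norm2_0.
case: (eqVneq d 0) => [d00|dn0].
  have H := key L0 EL0; rewrite d00 mulr0 in H.
  by apply: (le_trans H); rewrite d00 mulr0.
have dp : 0 < d by rewrite lt_def dn0 d0.
rewrite -ler_pdivrMr // LcE; apply: lb_le_inf => // L EL.
by rewrite ler_pdivrMr //; apply: key.
Qed.

End Lip.

Unset Implicit Arguments.
Set Strict Implicit.
Theorem lemma9 (R : realType) (S A O : finType) (d1 d2 d3 : nat)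
  (Thi : set 'rV[R]_d1) (Tlo : set 'rV[R]_d2) (Tb : set 'rV[R]_d3)
  (pihi : S -> O -> 'rV[R]_d1 -> R) (pilo : S -> O -> A -> 'rV[R]_d2 -> R)
  (pib : S -> O -> bool -> 'rV[R]_d3 -> R) (zeta : R)
  (s : int -> S) (a : int -> A) (th thh : param R d1 d2 d3) (t : int)
  (rho : int -> O -> bool -> R) (phi : O -> bool -> R) :
  convex_param (Theta Thi Tlo Tb) ->
  compact (Theta Thi Tlo Tb) ->
  standing_assumption Thi Tlo Tb pihi pilo pib ->
  0 < zeta < 1 ->
  Theta Thi Tlo Tb th -> Theta Thi Tlo Tb thh ->
  (forall u : int, is_pos_prob (rho u)) ->
  (forall (u : int) (o : O) (b : bool),
      backward zeta pihi pilo pib s a th u (rho (u + 1)) o b = rho u o b) ->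
  is_prob phi ->
  tv (forward zeta pihi pilo pib s a thh th t (rho t) phi)
     (forward zeta pihi pilo pib s a th th t (rho t) phi)
  <= hmax zeta pihi pilo pib s a th t / hmin zeta pihi pilo pib s a th t
     * (Lip_const zeta pihi pilo pib Thi Tlo Tb th (norm2 (psub thh th))
        * norm2 (psub thh th)
        / hmin zeta pihi pilo pib s a thh t).
Proof.
move=> cvT cT SA z01 thT thhT rhoP back [phi0 phi1].
have : exists o : O, True.
  case: (pickP (@predT O)) => [w _|H]; first by exists w.
  by move: phi1; rewrite big_pred0 // => /eqP; rewrite eq_sym oner_eq0.
case=> o0 _.
move: (lip_bound (S:=S) (A:=A) (O:=O) cvT cT SA z01 thT thhT) => /= [Lc0 Lb].
set Lc := Lip_const _ _ _ _ _ _ _ _ _ in Lc0 Lb *.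
set d := norm2 (psub thh th) in Lb *.
have [mp mlb mle] : [/\ 0 < hmin zeta pihi pilo pib s a thh t,
   (forall x : O * O * bool, hmin zeta pihi pilo pib s a thh t <=
      hfun zeta pihi pilo pib thh x.1.1 (s t) (a t) x.1.2 x.2) &
   hmin zeta pihi pilo pib s a thh t <= hmax zeta pihi pilo pib s a thh t].
  exact: (fin_inf (F := fun x : O * O * bool =>
     hfun zeta pihi pilo pib thh x.1.1 (s t) (a t) x.1.2 x.2) (o0, o0, true)
     (fun i => h_pos SA z01 thhT _ _ _ _ _)).
have [mp' mlb' mle'] : [/\ 0 < hmin zeta pihi pilo pib s a th t,
   (forall x : O * O * bool, hmin zeta pihi pilo pib s a th t <=
      hfun zeta pihi pilo pib th x.1.1 (s t) (a t) x.1.2 x.2) &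
   hmin zeta pihi pilo pib s a th t <= hmax zeta pihi pilo pib s a th t].
  exact: (fin_inf (F := fun x : O * O * bool =>
     hfun zeta pihi pilo pib th x.1.1 (s t) (a t) x.1.2 x.2) (o0, o0, true)
     (fun i => h_pos SA z01 thT _ _ _ _ _)).
have d0 : 0 <= d by exact: sqrtr_ge0.
set m := hmin zeta pihi pilo pib s a thh t in mp mlb mle *.
set c := Lc * d / m.
have c0 : 0 <= c by rewrite divr_ge0 // ?mulr_ge0 // ltW.
have rp : forall o b, 0 < rho t o b by move=> o b; exact: (rhoP t).1.
have Zp : forall op, 0 < \sum_o' \sum_b' hfun zeta pihi pilo pib th op (s t) (a t) o' b' * rho t o' b'.
  move=> op; apply: (sum2_gt0 o0) => o b; apply: mulr_gt0 => //.
  exact: (h_pos SA z01 thT).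
apply: (le_trans (y := c)); last first.
  rewrite -{1}[c]mul1r; apply: ler_wpM2r => //.
  by rewrite ler_pdivlMr // mul1r.
rewrite /forward; apply: tv_norm.
- move=> o b; apply: sumr_ge0 => op _; apply: sumr_ge0 => bp _.
  apply: divr_ge0; last exact: ltW.
  apply: mulr_ge0 => //; apply: mulr_ge0; last exact: ltW.
  apply: ltW; exact: (h_pos SA z01 thhT).
- move=> o b; apply: sumr_ge0 => op _; apply: sumr_ge0 => bp _.
  apply: divr_ge0; last exact: ltW.
  apply: mulr_ge0 => //; apply: mulr_ge0; last exact: ltW.
  apply: ltW; exact: (h_pos SA z01 thT).
- rewrite swap4 -[RHS]phi1; apply: eq_bigr => op _; apply: eq_bigr => bp _.
  under eq_bigr do under eq_bigr do rewrite -mulrA.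
  under eq_bigr do rewrite -mulr_suml.
  rewrite -mulr_suml mulrCA divff ?mulr1 //.
  by rewrite gt_eqF.
rewrite mulr_sumr; apply: ler_sum => o _; rewrite mulr_sumr; apply: ler_sum => b _.
rewrite -sumrB; apply: (le_trans (ler_norm_sum _ _ _)); rewrite mulr_sumr; apply: ler_sum => op _.
rewrite -sumrB; apply: (le_trans (ler_norm_sum _ _ _)); rewrite mulr_sumr; apply: ler_sum => bp _.
rewrite -!mulrBl !normrM (ger0_norm (ltW (rp o b))) (ger0_norm (phi0 op bp)).
rewrite [`|_^-1|]ger0_norm; last by rewrite invr_ge0 ltW.
rewrite !mulrA; apply: ler_wpM2r; first by rewrite invr_ge0 ltW.
apply: ler_wpM2r => //; apply: ler_wpM2r; first exact: ltW.
apply: (le_trans (Lb op (s t) (a t) o b)).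
have -> : Lc * d = c * m by rewrite /c divfK // gt_eqF.
have Hle : c * m <= c * hfun zeta pihi pilo pib thh op (s t) (a t) o b.
  by apply: ler_pM; [exact: c0 | exact: ltW | exact: lexx | exact: (mlb (op, o, b))].
by apply: (le_trans Hle); rewrite /hfun !mulrA.
Qed.
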